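(* Let $n\ge1$. There is a $\Pi^0_n$ equivalence relation on $\mathbb{N}^\mathbb{N}$, all of whose classes are countably infinite, which is not $\Sigma^0_n$-graphable.
   Context: $E$ is $\Gamma$-graphable if there is a simple undirected graph $G$ in $\Gamma$ whose connectedness relation (connected by a finite path) equals $E$. Pointclasses are lightface. *)

(* Defs.v *)
From Stdlib Require Import Arith List Relations.
Import ListNotations.

Inductive recf : Type :=
| RZero : recf
| RSucc : recf
| RProj : nat -> recf
| RComp : recf -> list recf -> recf
| RPrec : recf -> recf -> recf
| RMu   : recf -> recf.

(* Big-step semantics: [eval f v y] means f halts on arguments v with output y.
   Missing arguments default to 0. *)
Inductive eval : recf -> list nat -> nat -> Prop :=
| eZero v : eval RZero v 0
| eSucc v : eval RSucc v (S (hd 0 v))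
| eProj i v : eval (RProj i) v (nth i v 0)
| eComp f gs v ws y : evals gs v ws -> eval f ws y -> eval (RComp f gs) v y
| ePrec0 f g v y : eval f v y -> eval (RPrec f g) (0 :: v) y
| ePrecS f g n v r y :
    eval (RPrec f g) (n :: v) r -> eval g (n :: r :: v) y ->
    eval (RPrec f g) (S n :: v) y
| eMu f v n :
    eval f (n :: v) 0 ->
    (forall m, m < n -> exists k, eval f (m :: v) (S k)) ->
    eval (RMu f) v n
with evals : list recf -> list nat -> list nat -> Prop :=
| evNil v : evals [] v []
| evCons g gs v y ys : eval g v y -> evals gs v ys -> evals (g :: gs) v (y :: ys).

Definition computable (P : nat -> bool) : Prop :=
  exists f : recf, forall k, eval f [k] (if P k then 1 else 0).

Definition cpair (a b : nat) : nat := (a + b) * (a + b + 1) / 2 + b.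
Fixpoint code (s : list nat) : nat :=
  match s with [] => 0 | a :: s' => S (cpair a (code s')) end.

Definition baire := nat -> nat.
Definition prefix (x : baire) (m : nat) : list nat := map x (seq 0 m).

Definition ncons (m : nat) (x : baire) : baire :=
  fun i => match i with 0 => m | S j => x j end.

(** [Sig k A] : A is lightface Sigma^0_(k+1). *)
Fixpoint Sig (k : nat) (A : baire -> Prop) : Prop :=
  match k with
  | 0 => exists P : nat -> bool, computable P /\
           forall x, A x <-> exists m, P (code (prefix x m)) = true
  | S k' => exists B : baire -> Prop,
           Sig k' (fun z => ~ B z) /\
           forall x, A x <-> exists m, B (ncons m x)
  end.

(** Lightface Sigma^0_n and Pi^0_n subsets of N^N, for n >= 1
    (the n = 0 case is irrelevant here and set to False). *)
Definition Sigma0 (n : nat) (A : baire -> Prop) : Prop :=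
  match n with 0 => False | S k => Sig k A end.
Definition Pi0 (n : nat) (A : baire -> Prop) : Prop :=
  Sigma0 n (fun x => ~ A x).

(** Relations on N^N, via the computable homeomorphism N^N x N^N ~ N^N
    (interleaving). *)
Definition evens (z : baire) : baire := fun i => z (2 * i).
Definition odds (z : baire) : baire := fun i => z (2 * i + 1).
Definition Sigma0_rel (n : nat) (R : baire -> baire -> Prop) : Prop :=
  Sigma0 n (fun z => R (evens z) (odds z)).
Definition Pi0_rel (n : nat) (R : baire -> baire -> Prop) : Prop :=
  Pi0 n (fun z => R (evens z) (odds z)).

Definition simple_graph (G : baire -> baire -> Prop) : Prop :=
  (forall x y, G x y -> G y x) /\ (forall x, ~ G x x).

Definition Sigma0_graphable (n : nat) (E : baire -> baire -> Prop) : Prop :=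
  exists G : baire -> baire -> Prop,
    Sigma0_rel n G /\ simple_graph G /\
    forall x y, E x y <-> clos_refl_trans baire G x y.

Definition countably_infinite (A : baire -> Prop) : Prop :=
  exists f : nat -> baire,
    (forall i j, f i = f j -> i = j) /\ (forall y, A y <-> exists k, f k = y).

(* Main.v *)
Require Import Defs.
From Stdlib Require Import Arith List Relations Lia Bool Classical FunctionalExtensionality ClassicalEpsilon.
Import ListNotations.

Definition Tot (f : recf) (F : list nat -> nat) := forall v, eval f v (F v).
Record TF := mkTF { tr : recf; tf : list nat -> nat; tok : Tot tr tf }.

Fixpoint PRf (F G : list nat -> nat) (n : nat) (w : list nat) : nat :=
  match n with 0 => F w | S m => G (m :: PRf F G m w :: w) end.

Lemma eval_prec f g F G : Tot f F -> Tot g G -> forall n w, eval (RPrec f g) (n :: w) (PRf F G n w).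
Proof.
  intros Hf Hg n w; induction n; simpl.
  - apply ePrec0, Hf.
  - eapply ePrecS; [exact IHn | apply Hg].
Qed.

Lemma evals_map (l : list TF) v : evals (map tr l) v (map (fun a => tf a v) l).
Proof. induction l; simpl; constructor; auto. apply tok. Qed.

Definition vr (i : nat) : TF := mkTF (RProj i) (fun v => nth i v 0) (fun v => eProj i v).
Definition succTF : TF := mkTF RSucc (fun v => S (hd 0 v)) (fun v => eSucc v).
Definition zeroTF : TF := mkTF RZero (fun _ => 0) (fun v => eZero v).

Lemma ap_ok (u : TF) (l : list TF) : Tot (RComp (tr u) (map tr l)) (fun v => tf u (map (fun a => tf a v) l)).
Proof. intro v. eapply eComp. apply evals_map. apply tok. Qed.
Definition ap (u : TF) (l : list TF) : TF := mkTF _ _ (ap_ok u l).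

Lemma retf_ok (u : TF) (F : list nat -> nat) (H : forall v, tf u v = F v) : Tot (tr u) F.
Proof. intro v. rewrite <- H. apply tok. Qed.
Definition retf (u : TF) (F : list nat -> nat) (H : forall v, tf u v = F v) : TF :=
  mkTF _ _ (retf_ok u F H).

Definition env (v : list nat) := map (fun i => nth i v 0) (seq 0 6).
Lemma evals_proj v : evals (map RProj (seq 0 6)) v (env v).
Proof. unfold env. simpl. repeat constructor. Qed.

Lemma loop_ok (init step cnt : TF) :
  Tot (RComp (RPrec (tr init) (tr step)) (tr cnt :: map RProj (seq 0 6)))
      (fun v => PRf (tf init) (tf step) (tf cnt v) (env v)).
Proof.
  intro v. eapply eComp. constructor. apply tok. apply evals_proj.
  apply eval_prec; apply tok.
Qed.
Definition loop (init step cnt : TF) : TF := mkTF _ _ (loop_ok init step cnt).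

Definition sc (a : TF) : TF := retf (ap succTF [a]) (fun v => S (tf a v)) (fun v => eq_refl).

Fixpoint cst (k : nat) : TF := match k with 0 => zeroTF | S k' => sc (cst k') end.
Lemma cst_spec k v : tf (cst k) v = k.
Proof. induction k; simpl; auto. Qed.

Definition addT := loop (vr 1) (sc (vr 1)) (vr 0).
Lemma addT_spec v : tf addT v = nth 0 v 0 + nth 1 v 0.
Proof.
  simpl. generalize (nth 0 v 0). induction n; simpl; auto.
Qed.
Definition add2 (a b : TF) : TF :=
  retf (ap addT [a; b]) (fun v => tf a v + tf b v) (fun v => addT_spec _).

Definition mulT := loop (cst 0) (add2 (vr 1) (vr 3)) (vr 0).
Lemma mulT_spec v : tf mulT v = nth 0 v 0 * nth 1 v 0.
Proof.
  simpl. generalize (nth 0 v 0). induction n; simpl.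
  - reflexivity.
  - rewrite IHn. lia.
Qed.
Definition mul2 (a b : TF) : TF :=
  retf (ap mulT [a; b]) (fun v => tf a v * tf b v) (fun v => mulT_spec _).

Definition predT := loop (cst 0) (vr 0) (vr 0).
Lemma predT_spec v : tf predT v = pred (nth 0 v 0).
Proof. simpl. destruct (nth 0 v 0); simpl; auto. Qed.
Definition pred1 (a : TF) : TF :=
  retf (ap predT [a]) (fun v => pred (tf a v)) (fun v => predT_spec _).

Definition subT := loop (vr 0) (pred1 (vr 1)) (vr 1).
Lemma subT_spec v : tf subT v = nth 0 v 0 - nth 1 v 0.
Proof.
  simpl. generalize (nth 1 v 0). induction n; simpl.
  - lia.
  - rewrite IHn. lia.
Qed.
Definition sub2 (a b : TF) : TF :=
  retf (ap subT [a; b]) (fun v => tf a v - tf b v) (fun v => subT_spec _).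

Definition sgn (a : TF) := sub2 (cst 1) (sub2 (cst 1) a).
Definition neg (a : TF) := sub2 (cst 1) a.
Definition leb2 (a b : TF) := sub2 (cst 1) (sub2 a b).
Definition eqb2 (a b : TF) := mul2 (leb2 a b) (leb2 b a).
Definition or2 (a b : TF) := sgn (add2 a b).
Definition and2 (a b : TF) := mul2 (sgn a) (sgn b).
Definition ite (b x y : TF) := add2 (mul2 (sgn b) x) (mul2 (neg (sgn b)) y).

Definition b2n (b : bool) : nat := if b then 1 else 0.
Ltac tfs := cbn [tf retf sub2 add2 mul2 pred1 cst sc zeroTF vr] in *.

Lemma sgn_spec a v : tf (sgn a) v = b2n (negb (tf a v =? 0)).
Proof. unfold sgn. tfs. destruct (tf a v); cbn [b2n negb Nat.eqb] in *; lia. Qed.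
Lemma neg_spec a v : tf (neg a) v = 1 - tf a v.
Proof. unfold neg; tfs. auto. Qed.
Lemma leb2_spec a b v : tf (leb2 a b) v = b2n (tf a v <=? tf b v).
Proof. unfold leb2; tfs. destruct (Nat.leb_spec (tf a v) (tf b v)); cbn [b2n negb Nat.eqb] in *; lia. Qed.
Lemma eqb2_spec a b v : tf (eqb2 a b) v = b2n (tf a v =? tf b v).
Proof.
  unfold eqb2. tfs. rewrite !leb2_spec.
  destruct (Nat.leb_spec (tf a v) (tf b v)); destruct (Nat.leb_spec (tf b v) (tf a v));
  destruct (Nat.eqb_spec (tf a v) (tf b v)); cbn [b2n negb Nat.eqb] in *; lia.
Qed.
Lemma or2_spec a b v : tf (or2 a b) v = b2n (negb (tf a v =? 0) || negb (tf b v =? 0)).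
Proof. unfold or2. rewrite sgn_spec. tfs. destruct (tf a v), (tf b v); simpl; auto. Qed.
Lemma and2_spec a b v : tf (and2 a b) v = b2n (negb (tf a v =? 0) && negb (tf b v =? 0)).
Proof. unfold and2. tfs. rewrite !sgn_spec. destruct (tf a v), (tf b v); simpl; auto. Qed.
Lemma ite_spec b x y v : tf (ite b x y) v = if tf b v =? 0 then tf y v else tf x v.
Proof.
  unfold ite. tfs. rewrite neg_spec, !sgn_spec.
  destruct (tf b v); cbn [b2n negb Nat.eqb] in *; lia.
Qed.

Fixpoint tri (n : nat) : nat := match n with 0 => 0 | S m => tri m + S m end.
Definition triT := loop (cst 0) (add2 (vr 1) (sc (vr 0))) (vr 0).
Lemma triT_spec v : tf triT v = tri (nth 0 v 0).
Proof. simpl. generalize (nth 0 v 0). induction n; simpl; auto. Qed.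
Definition tri1 (a : TF) := retf (ap triT [a]) (fun v => tri (tf a v)) (fun v => triT_spec _).

Lemma tri2 n : 2 * tri n = n * (n + 1).
Proof. induction n; simpl tri; nia. Qed.
Lemma tri_div n : n * (n + 1) / 2 = tri n.
Proof. rewrite <- tri2. rewrite Nat.mul_comm. apply Nat.div_mul. lia. Qed.
Lemma cpair_tri a b : cpair a b = tri (a + b) + b.
Proof. unfold cpair. rewrite tri_div. auto. Qed.
Lemma tri_mono a b : a <= b -> tri a <= tri b.
Proof. induction 1; simpl; lia. Qed.

Fixpoint sroot (c : nat) : nat :=
  match c with 0 => 0 | S c' => let r := sroot c' in if tri (S r) <=? S c' then S r else r end.
Lemma sroot_bounds c : tri (sroot c) <= c < tri (S (sroot c)).
Proof.
  induction c. simpl; lia. cbn [sroot]. set (r := sroot c) in *.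
  destruct (Nat.leb_spec (tri (S r)) (S c)); simpl in *; lia.
Qed.
Lemma sroot_uniq c w : tri w <= c < tri (S w) -> sroot c = w.
Proof.
  intros H. pose proof (sroot_bounds c).
  destruct (Nat.lt_trichotomy (sroot c) w) as [h|[h|h]]; auto.
  - apply tri_mono in h. lia.
  - apply tri_mono in h. lia.
Qed.
Definition usnd c := c - tri (sroot c).
Definition ufst c := sroot c - usnd c.
Lemma unpair_cpair a b : ufst (cpair a b) = a /\ usnd (cpair a b) = b.
Proof.
  rewrite cpair_tri. assert (sroot (tri (a+b) + b) = a + b).
  { apply sroot_uniq. simpl. split. lia. replace (a + b + 1) with (S (a+b)) by lia. simpl. lia. }
  unfold ufst, usnd. rewrite H. lia.
Qed.

Definition srootT := loop (cst 0) (add2 (vr 1) (leb2 (tri1 (sc (vr 1))) (sc (vr 0)))) (vr 0).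
Lemma srootT_spec v : tf srootT v = sroot (nth 0 v 0).
Proof.
  cbn [tf loop srootT]. tfs. generalize (nth 0 v 0). induction n. reflexivity.
  cbn [PRf]. tfs. rewrite leb2_spec. tfs. cbn [tri1 tf retf] in *. rewrite IHn. cbn [nth].
  tfs. cbn [sroot nth]. destruct (tri (S (sroot n)) <=? S n); cbn [b2n]; lia.
Qed.
Definition sroot1 (a : TF) := retf (ap srootT [a]) (fun v => sroot (tf a v)) (fun v => srootT_spec _).

Definition usndT := sub2 (vr 0) (tri1 (sroot1 (vr 0))).
Definition usnd1 (a : TF) := retf (ap usndT [a]) (fun v => usnd (tf a v)) (fun v => eq_refl).
Definition ufstT := sub2 (sroot1 (vr 0)) (usnd1 (vr 0)).
Definition ufst1 (a : TF) := retf (ap ufstT [a]) (fun v => ufst (tf a v)) (fun v => eq_refl).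

Definition hdc c := ufst (pred c).
Definition tlc c := usnd (pred c).
Definition hd1 (a : TF) := retf (ufst1 (pred1 a)) (fun v => hdc (tf a v)) (fun v => eq_refl).
Definition tl1 (a : TF) := retf (usnd1 (pred1 a)) (fun v => tlc (tf a v)) (fun v => eq_refl).

Definition cpair2 (a b : TF) := retf (add2 (tri1 (add2 a b)) b) (fun v => cpair (tf a v) (tf b v))
  (fun v => eq_sym (cpair_tri _ _)).

Lemma hdc_cons a s : hdc (code (a :: s)) = a.
Proof. unfold hdc. simpl. apply unpair_cpair. Qed.
Lemma tlc_cons a s : tlc (code (a :: s)) = code s.
Proof. unfold tlc. simpl. apply unpair_cpair. Qed.
Lemma hdc_0 : hdc 0 = 0. Proof. reflexivity. Qed.
Lemma tlc_0 : tlc 0 = 0. Proof. reflexivity. Qed.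

Definition tlit c p := Nat.iter p tlc c.
Definition tlitT := loop (vr 0) (tl1 (vr 1)) (vr 1).
Lemma tlitT_spec v : tf tlitT v = tlit (nth 0 v 0) (nth 1 v 0).
Proof. cbn [tf loop tlitT vr]. generalize (nth 1 v 0). induction n. reflexivity. cbn [PRf]. rewrite IHn. reflexivity. Qed.
Definition tlit2 (a b : TF) := retf (ap tlitT [a; b]) (fun v => tlit (tf a v) (tf b v)) (fun v => tlitT_spec _).

Definition nthc c p := hdc (tlit c p).
Definition nth2 (a b : TF) := retf (hd1 (tlit2 a b)) (fun v => nthc (tf a v) (tf b v)) (fun v => eq_refl).

Lemma tlc_code l : tlc (code l) = code (tl l).
Proof. destruct l. reflexivity. apply tlc_cons. Qed.
Lemma skipn_S_tl p : forall (s : list nat), skipn (S p) s = tl (skipn p s).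
Proof. induction p; intros [|a s]; simpl; auto. rewrite <- IHp. reflexivity. Qed.
Lemma tlit_code s p : tlit (code s) p = code (skipn p s).
Proof.
  unfold tlit. induction p. reflexivity.
  change (tlc (Nat.iter p tlc (code s)) = code (skipn (S p) s)). rewrite IHp, tlc_code, skipn_S_tl. reflexivity.
Qed.
Lemma nthc_code s p : nthc (code s) p = nth p s 0.
Proof.
  unfold nthc. rewrite tlit_code. revert s; induction p; intros [|a s]; simpl; auto.
  apply hdc_cons.
Qed.

Ltac tfs2 := cbn [tf retf sub2 add2 mul2 pred1 cst sc zeroTF vr tri1 sroot1 usnd1 ufst1 hd1 tl1 cpair2 tlit2 nth2].

Definition iota d t := if t <? d then t else 2 * t + 2 - d.
Definition keyc d c M := code (map (fun t => nthc c (iota d t)) (seq 0 M)).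

Definition idxT := sub2 (sub2 (vr 3) (cst 1)) (vr 0).
Definition iotT := ite (leb2 (sc idxT) (vr 4)) idxT (sub2 (add2 (mul2 (cst 2) idxT) (cst 2)) (vr 4)).
Definition keyT := loop (cst 0) (sc (cpair2 (nth2 (vr 2) iotT) (vr 1))) (vr 1).

Lemma iotT_spec t a c M d : tf iotT (t :: a :: env [c; M; d]) = iota d (M - 1 - t).
Proof.
  unfold iotT. rewrite ite_spec, leb2_spec. unfold idxT. tfs2. cbn [nth env map seq].
  unfold iota. destruct (Nat.ltb_spec (M - 1 - t) d); destruct (Nat.leb_spec (S (M - 1 - t)) d);
  cbn [b2n Nat.eqb]; lia.
Qed.

Lemma keyT_loop c M d n : n <= M ->
  PRf (tf (cst 0)) (tf (sc (cpair2 (nth2 (vr 2) iotT) (vr 1)))) n (env [c; M; d])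
  = code (map (fun t => nthc c (iota d t)) (seq (M - n) n)).
Proof.
  induction n; intros Hn. reflexivity.
  cbn [PRf]. rewrite IHn by lia. tfs2. rewrite iotT_spec. cbn [nth env map seq].
  replace (M - S n) with (M - 1 - n) by lia.
  replace (M - n) with (S (M - 1 - n)) by lia. reflexivity.
Qed.

Lemma keyT_spec c M d : tf keyT [c; M; d] = keyc d c M.
Proof.
  unfold keyT. cbn [tf loop vr nth]. rewrite keyT_loop by lia. rewrite Nat.sub_diag. reflexivity.
Qed.


Definition key3 (c M d : TF) := retf (ap keyT [c; M; d]) (fun v => keyc (tf d v) (tf c v) (tf M v))
  (fun v => keyT_spec _ _ _).

Definition bexT (body bound : TF) :=
  loop (cst 0) (or2 (vr 1) (ap body [vr 0; vr 2; vr 3; vr 4; vr 5; vr 6; vr 7])) bound.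
Lemma bexT_spec body bound v :
  tf (bexT body bound) v = b2n (existsb (fun t => negb (tf body (t :: env v) =? 0)) (seq 0 (tf bound v))).
Proof.
  unfold bexT. cbn [tf loop]. generalize (tf bound v). induction n. reflexivity.
  cbn [PRf]. rewrite or2_spec. rewrite seq_S, existsb_app. cbn [existsb].
  change (tf (vr 1) (n :: PRf (tf (cst 0)) (tf (or2 (vr 1) (ap body [vr 0; vr 2; vr 3; vr 4; vr 5; vr 6; vr 7]))) n (env v) :: env v))
   with (PRf (tf (cst 0)) (tf (or2 (vr 1) (ap body [vr 0; vr 2; vr 3; vr 4; vr 5; vr 6; vr 7]))) n (env v)).
  rewrite IHn. cbn [tf ap map vr nth env seq].
  destruct (existsb _ (seq 0 n)); destruct (tf body _ =? 0); reflexivity.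
Qed.
Definition bex2 (body bound : TF) :=
  retf (bexT body bound) (fun v => b2n (existsb (fun t => negb (tf body (t :: env v) =? 0)) (seq 0 (tf bound v))))
   (bexT_spec body bound).

Lemma existsb_seq f n : existsb f (seq 0 n) = true <-> exists t, t < n /\ f t = true.
Proof.
  rewrite existsb_exists. split; intros [t [h1 h2]]; exists t; split; auto;
  apply in_seq in h1 || apply in_seq; lia.
Qed.

Definition parT := loop (cst 0) (neg (vr 1)) (vr 0).
Lemma parT_spec v : tf parT v = b2n (Nat.odd (nth 0 v 0)).
Proof.
  unfold parT. cbn [tf loop vr]. generalize (nth 0 v 0). induction n. reflexivity.
  cbn [PRf]. rewrite neg_spec. cbn [tf vr nth]. rewrite IHn. rewrite Nat.odd_succ, <- Nat.negb_odd.
  destruct (Nat.odd n); reflexivity.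
Qed.
Definition par1 (a : TF) := retf (ap parT [a]) (fun v => b2n (Nat.odd (tf a v))) (fun v => parT_spec _).

Definition btl (x : baire) : baire := fun i => x (S i).

Lemma prefix_S x L : prefix x (S L) = x 0 :: prefix (btl x) L.
Proof.
  unfold prefix, btl. cbn [seq map]. f_equal. rewrite <- seq_shift, map_map. reflexivity.
Qed.
Lemma prefix_0 x : prefix x 0 = [].
Proof. reflexivity. Qed.
Lemma length_prefix x L : length (prefix x L) = L.
Proof. unfold prefix. rewrite length_map, length_seq. auto. Qed.
Lemma nth_prefix x L p : nth p (prefix x L) 0 = if p <? L then x p else 0.
Proof.
  destruct (Nat.ltb_spec p L).
  - unfold prefix. rewrite nth_indep with (d' := x 0) by (rewrite length_map, length_seq; auto).
    rewrite map_nth, seq_nth by auto. auto.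
  - apply nth_overflow. rewrite length_prefix. auto.
Qed.
Lemma cpair_ge a b : b <= cpair a b.
Proof. rewrite cpair_tri. lia. Qed.
Lemma code_ge_len s : length s <= code s.
Proof. induction s; simpl. auto. pose proof (cpair_ge a (code s)). lia. Qed.
Lemma code_inj s t : code s = code t -> s = t.
Proof.
  revert t; induction s; intros [|b t]; simpl; intro H; try discriminate; auto.
  injection H as H.
  pose proof (unpair_cpair a (code s)) as [h1 h2]. rewrite H in h1, h2.
  pose proof (unpair_cpair b (code t)) as [h3 h4]. f_equal; [congruence|]. apply IHs. congruence.
Qed.
Lemma code_zero s : code s = 0 <-> s = [].
Proof. destruct s; simpl; split; intro; congruence. Qed.
Lemma tlit_avail s p : tlit (code s) p <> 0 <-> p < length s.
Proof.
  rewrite tlit_code, code_zero. revert s; induction p; intros [|a s]; simpl; split; intro H;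
  try congruence; try lia.
  apply IHp in H. lia. apply IHp. lia.
Qed.
Lemma nthc_prefix x L p : nthc (code (prefix x L)) p = if p <? L then x p else 0.
Proof. rewrite nthc_code. apply nth_prefix. Qed.

Lemma keyc_prefix d v L M : (forall t, t < M -> iota d t < L) ->
  keyc d (code (prefix v L)) M = code (prefix (fun t => v (iota d t)) M).
Proof.
  intro H. unfold keyc. change (prefix (fun t => v (iota d t)) M) with (map (fun t => v (iota d t)) (seq 0 M)).
  f_equal. apply map_ext_in. intros t Ht. apply in_seq in Ht.
  rewrite nthc_prefix. specialize (H t ltac:(lia)). destruct (Nat.ltb_spec (iota d t) L); auto; lia.
Qed.
Lemma takec_prefix v L M : M <= L -> keyc M (code (prefix v L)) M = code (prefix v M).
Proof.
  intro H. rewrite keyc_prefix. unfold prefix. f_equal. apply map_ext_in.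
  intros t Ht. apply in_seq in Ht. unfold iota. destruct (Nat.ltb_spec t M); auto; lia.
  intros t Ht. unfold iota. destruct (Nat.ltb_spec t M); lia.
Qed.
Lemma tlc_prefix y L : tlc (code (prefix y L)) = code (prefix (btl y) (pred L)).
Proof. destruct L. reflexivity. rewrite prefix_S, tlc_cons. reflexivity. Qed.

Definition agree (x y : baire) L := forall i, i < L -> x i = y i.
Lemma prefix_agree x y L : agree x y L -> prefix x L = prefix y L.
Proof. intro H. unfold prefix. apply map_ext_in. intros t Ht. apply in_seq in Ht. apply H. lia. Qed.
Lemma agree_prefix x y L : prefix x L = prefix y L -> agree x y L.
Proof.
  intros H i Hi. pose proof (nth_prefix x L i). pose proof (nth_prefix y L i).
  rewrite H in H0. destruct (Nat.ltb_spec i L); [congruence | lia].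
Qed.

Lemma comp_of_TF (u : TF) (P : nat -> bool) : (forall c, tf u [c] = b2n (P c)) -> computable P.
Proof. intro H. exists (tr u). intro k. pose proof (tok u [k]). rewrite H in H0. exact H0. Qed.

Lemma foreign_ok (f : recf) (P : nat -> bool) : (forall k, eval f [k] (if P k then 1 else 0)) ->
  Tot (RComp f [RProj 0]) (fun v => b2n (P (nth 0 v 0))).
Proof. intros H v. eapply eComp. repeat constructor. apply H. Qed.
Definition foreign (f : recf) (P : nat -> bool) H : TF := mkTF _ _ (foreign_ok f P H).

Definition avail' c M := orb (M =? 0) (negb (tlit c (M - 1) =? 0)).
Lemma avail'_prefix y L M : avail' (code (prefix y L)) M = true <-> M <= L.
Proof.
  unfold avail'. rewrite Bool.orb_true_iff, Nat.eqb_eq, Bool.negb_true_iff, Nat.eqb_neq, tlit_avail, length_prefix.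
  lia.
Qed.
Definition availT (M c : TF) := or2 (eqb2 M (cst 0)) (tlit2 c (pred1 M)).
Lemma availT_spec M c v : tf (availT M c) v = b2n (avail' (tf c v) (tf M v)).
Proof.
  unfold availT, avail'. rewrite or2_spec, eqb2_spec. tfs2.
  replace (tf M v - 1) with (pred (tf M v)) by lia.
  destruct (tf M v =? 0), (tlit (tf c v) (pred (tf M v)) =? 0); reflexivity.
Qed.

Lemma Sig_ext k (A A' : baire -> Prop) : (forall x, A x <-> A' x) -> Sig k A -> Sig k A'.
Proof.
  destruct k; simpl; intros H [P [h1 h2]]; exists P; split; auto; intro x; rewrite <- H; auto.
Qed.

Lemma existsb_ext {T} (f g : T -> bool) l : (forall x, f x = g x) -> existsb f l = existsb g l.
Proof. intro H. induction l; simpl; auto. rewrite H, IHl. auto. Qed.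

Lemma nb2n b : negb (b2n b =? 0) = b.
Proof. destruct b; reflexivity. Qed.

Lemma b2n_or a b : b2n (negb (b2n a =? 0) || negb (b2n b =? 0)) = b2n (a || b).
Proof. destruct a, b; reflexivity. Qed.
Lemma b2n_and a b : b2n (negb (b2n a =? 0) && negb (b2n b =? 0)) = b2n (a && b).
Proof. destruct a, b; reflexivity. Qed.
Lemma b2n_inj a b : b2n a = b2n b -> a = b.
Proof. destruct a, b; simpl; congruence. Qed.

Lemma Sig0_or A B : Sig 0 A -> Sig 0 B -> Sig 0 (fun x => A x \/ B x).
Proof.
  intros [P1 [[f1 h1] e1]] [P2 [[f2 h2] e2]].
  exists (fun c => P1 c || P2 c). split.
  - apply comp_of_TF with (u := or2 (foreign f1 P1 h1) (foreign f2 P2 h2)).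
    intro c. rewrite or2_spec. apply b2n_or.
  - intro x. rewrite e1, e2. split.
    + intros [[m h]|[m h]]; exists m; rewrite h; auto using orb_true_r.
    + intros [m h]. apply orb_true_iff in h as [h|h]; [left|right]; eauto.
Qed.

Lemma Sig0_tail A : Sig 0 A -> Sig 0 (fun y => A (btl y)).
Proof.
  intros [P [[f h] e]]. exists (fun c => P (tlc c)). split.
  - apply comp_of_TF with (u := ap (foreign f P h) [tl1 (vr 0)]). intro c. reflexivity.
  - intro y. rewrite e. split.
    + intros [m hm]. exists (S m). rewrite tlc_prefix. auto.
    + intros [m hm]. rewrite tlc_prefix in hm. eauto.
Qed.

Definition exbody (F : TF) := and2 (availT (vr 0) (vr 1)) (ap F [key3 (vr 1) (vr 0) (vr 0)]).
Definition ExP (P : nat -> bool) c := existsb (fun M => avail' c M && P (keyc M c M)) (seq 0 (S c)).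
Lemma exT_spec f P h c : tf (bex2 (exbody (foreign f P h)) (sc (vr 0))) [c] = b2n (ExP P c).
Proof.
  cbn [tf bex2 retf sc vr nth]. f_equal. unfold ExP. apply existsb_ext. intro M.
  unfold exbody. rewrite and2_spec, availT_spec. cbn [tf ap map vr nth env seq foreign key3 retf].
  destruct (avail' c M), (P (keyc M c M)); reflexivity.
Qed.
Lemma ExP_prefix P y L : ExP P (code (prefix y L)) = true -> exists M, P (code (prefix y M)) = true.
Proof.
  unfold ExP. intro H. apply existsb_seq in H as [M [_ H]]. apply andb_true_iff in H as [h1 h2].
  apply avail'_prefix in h1. rewrite takec_prefix in h2 by auto. eauto.
Qed.
Lemma ExP_prefix' P y M L : M <= L -> P (code (prefix y M)) = true -> ExP P (code (prefix y L)) = true.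
Proof.
  intros HL H. unfold ExP. apply existsb_seq. exists M. split.
  pose proof (code_ge_len (prefix y L)). rewrite length_prefix in H0. lia.
  rewrite takec_prefix by auto. rewrite H, andb_true_r. apply avail'_prefix. auto.
Qed.

Lemma Sig0_and A B : Sig 0 A -> Sig 0 B -> Sig 0 (fun x => A x /\ B x).
Proof.
  intros [P1 [[f1 h1] e1]] [P2 [[f2 h2] e2]].
  exists (fun c => ExP P1 c && ExP P2 c). split.
  - apply comp_of_TF with (u := and2 (bex2 (exbody (foreign f1 P1 h1)) (sc (vr 0)))
                                     (bex2 (exbody (foreign f2 P2 h2)) (sc (vr 0)))).
    intro c. rewrite and2_spec. rewrite !exT_spec. apply b2n_and.
  - intro x. rewrite e1, e2. split.
    + intros [[m1 k1] [m2 k2]]. exists (max m1 m2). apply andb_true_iff. split.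
      eapply ExP_prefix'; [|eauto]; lia. eapply ExP_prefix'; [|eauto]; lia.
    + intros [m hm]. apply andb_true_iff in hm as [k1 k2]. split; eapply ExP_prefix; eauto.
Qed.

Definition ncons_body (F : TF) :=
  and2 (availT (vr 0) (vr 2)) (ap F [sc (cpair2 (vr 1) (key3 (vr 2) (vr 0) (vr 0)))]).
Definition ExQ (P : nat -> bool) c :=
  P 0 || existsb (fun i => existsb (fun M => avail' c M && P (S (cpair i (keyc M c M)))) (seq 0 (S c))) (seq 0 (S c)).

Lemma Sig0_ex A : Sig 0 A -> Sig 0 (fun q => exists i, A (ncons i q)).
Proof.
  intros [P [[f h] e]]. exists (ExQ P). split.
  - apply comp_of_TF with (u := or2 (ap (foreign f P h) [cst 0])
        (bex2 (bex2 (ncons_body (foreign f P h)) (sc (vr 1))) (sc (vr 0)))).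
    intro c. rewrite or2_spec. cbn [tf ap map cst sc zeroTF foreign bex2 retf vr nth].
    unfold ExQ. rewrite !nb2n. f_equal. f_equal. cbn [env map seq nth].
    apply existsb_ext. intro i. rewrite nb2n. cbn [env map seq nth].
    apply existsb_ext. intro M. unfold ncons_body. rewrite and2_spec, availT_spec, nb2n.
    cbn [tf ap map vr nth env seq foreign key3 retf cpair2 sc succTF hd].
    rewrite !nb2n. reflexivity.
  - intro q. split.
    + intros [i Hi]. apply e in Hi as [L HL]. destruct L.
      * exists 0. unfold ExQ. rewrite prefix_0 in HL. simpl in HL. rewrite HL. reflexivity.
      * rewrite prefix_S in HL. exists (max L i). unfold ExQ. apply orb_true_iff. right.
        apply existsb_seq. exists i. split.
        pose proof (code_ge_len (prefix q (max L i))). rewrite length_prefix in H. lia.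
        apply existsb_seq. exists L. split.
        pose proof (code_ge_len (prefix q (max L i))). rewrite length_prefix in H. lia.
        rewrite takec_prefix by lia. apply andb_true_iff. split. apply avail'_prefix. lia.
        exact HL.
    + intros [L HL]. unfold ExQ in HL. apply orb_true_iff in HL as [HL|HL].
      * exists 0. apply e. exists 0. exact HL.
      * apply existsb_seq in HL as [i [_ HL]]. apply existsb_seq in HL as [M [_ HL]].
        apply andb_true_iff in HL as [h1 h2]. apply avail'_prefix in h1.
        rewrite takec_prefix in h2 by auto. exists i. apply e. exists (S M).
        rewrite prefix_S. exact h2.
Qed.

Lemma Sig0_local (C : baire -> Prop) (u : TF) (Q : nat -> bool) :
  (forall c, tf u [c] = b2n (Q c)) ->
  (forall y L, Q (code (prefix y L)) = true -> C y) ->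
  (forall y, C y -> exists L, Q (code (prefix y L)) = true) -> Sig 0 C.
Proof.
  intros H1 H2 H3. exists Q. split. eapply comp_of_TF; eauto.
  intro y; split; eauto. intros [m hm]; eauto.
Qed.

Lemma avail_prefix y L p : negb (tlit (code (prefix y L)) p =? 0) = true <-> p < L.
Proof. rewrite negb_true_iff, Nat.eqb_neq, tlit_avail, length_prefix. tauto. Qed.

Definition nthv p y L : nthc (code (prefix y L)) p = if p <? L then y p else 0 := nthc_prefix y L p.

Definition QPar (b : bool) c :=
  negb (tlit c 1 =? 0) && (if b then negb else (fun x => x)) (Bool.eqb (Nat.odd (nthc c 0)) (Nat.odd (nthc c 1))).
Definition uPar (b : bool) :=
  and2 (tlit2 (vr 0) (cst 1))
       ((if b then neg else (fun x => x)) (eqb2 (par1 (nth2 (vr 0) (cst 0))) (par1 (nth2 (vr 0) (cst 1))))).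
Lemma uPar_spec b c : tf (uPar b) [c] = b2n (QPar b c).
Proof.
  unfold uPar, QPar. rewrite and2_spec. destruct b.
  - rewrite neg_spec, eqb2_spec. tfs2. cbn [par1 tf retf nth2 vr cst sc zeroTF nth].
    destruct (tlit c 1 =? 0), (Nat.odd (nthc c 0)), (Nat.odd (nthc c 1)); reflexivity.
  - rewrite eqb2_spec. tfs2. cbn [par1 tf retf nth2 vr cst sc zeroTF nth].
    destruct (tlit c 1 =? 0), (Nat.odd (nthc c 0)), (Nat.odd (nthc c 1)); reflexivity.
Qed.

Lemma odd_even_iff a b : Nat.even a = Nat.even b <-> Nat.odd a = Nat.odd b.
Proof. unfold Nat.odd. destruct (Nat.even a), (Nat.even b); simpl; split; congruence. Qed.

Lemma Sig0_par : Sig 0 (fun q => Nat.even (q 0) <> Nat.even (q 1)).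
Proof.
  apply Sig0_local with (u := uPar true) (Q := QPar true). apply uPar_spec.
  - intros y L H. unfold QPar in H. apply andb_true_iff in H as [h1 h2].
    apply avail_prefix in h1. rewrite !nthv in h2.
    destruct (Nat.ltb_spec 0 L); try lia. destruct (Nat.ltb_spec 1 L); try lia.
    rewrite odd_even_iff. intro E. rewrite E, eqb_reflx in h2. discriminate.
  - intros y H. exists 2. unfold QPar. apply andb_true_iff. split. apply avail_prefix. lia.
    rewrite !nthv. simpl. rewrite odd_even_iff in H.
    destruct (Nat.odd (y 0)), (Nat.odd (y 1)); simpl; congruence.
Qed.
Lemma Sig0_npar : Sig 0 (fun q => ~ Nat.even (q 0) <> Nat.even (q 1)).
Proof.
  apply Sig0_local with (u := uPar false) (Q := QPar false). apply uPar_spec.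
  - intros y L H. unfold QPar in H. apply andb_true_iff in H as [h1 h2].
    apply avail_prefix in h1. rewrite !nthv in h2.
    destruct (Nat.ltb_spec 0 L); try lia. destruct (Nat.ltb_spec 1 L); try lia.
    rewrite odd_even_iff. apply eqb_prop in h2. auto.
  - intros y H. exists 2. unfold QPar. apply andb_true_iff. split. apply avail_prefix. lia.
    rewrite !nthv. simpl. assert (Nat.even (y 0) = Nat.even (y 1)).
    { destruct (Nat.even (y 0)), (Nat.even (y 1)); try reflexivity; exfalso; apply H; discriminate. }
    rewrite odd_even_iff in H0. rewrite H0. apply eqb_reflx.
Qed.

Definition QC1 (b : bool) c :=
  let i := nthc c 0 in
  negb (tlit c (2 * i + 4) =? 0) && (if b then negb else (fun x => x)) (nthc c (2 * i + 3) =? nthc c (2 * i + 4)).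
Definition I3 := add2 (mul2 (cst 2) (nth2 (vr 0) (cst 0))) (cst 3).
Definition I4 := add2 (mul2 (cst 2) (nth2 (vr 0) (cst 0))) (cst 4).
Definition uC1 (b : bool) :=
  and2 (tlit2 (vr 0) I4) ((if b then neg else (fun x => x)) (eqb2 (nth2 (vr 0) I3) (nth2 (vr 0) I4))).
Lemma uC1_spec b c : tf (uC1 b) [c] = b2n (QC1 b c).
Proof.
  unfold uC1, QC1. rewrite and2_spec. destruct b.
  - rewrite neg_spec, eqb2_spec. unfold I3, I4. tfs2. cbn [nth].
    destruct (tlit c (2 * nthc c 0 + 4) =? 0), (nthc c (2 * nthc c 0 + 3) =? nthc c (2 * nthc c 0 + 4)); reflexivity.
  - rewrite eqb2_spec. unfold I3, I4. tfs2. cbn [nth].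
    destruct (tlit c (2 * nthc c 0 + 4) =? 0), (nthc c (2 * nthc c 0 + 3) =? nthc c (2 * nthc c 0 + 4)); reflexivity.
Qed.

Lemma Sig0_C1 : Sig 0 (fun v => v (2 * v 0 + 3) <> v (2 * v 0 + 4)).
Proof.
  apply Sig0_local with (u := uC1 true) (Q := QC1 true). apply uC1_spec.
  - intros y L H. unfold QC1 in H. apply andb_true_iff in H as [h1 h2].
    apply avail_prefix in h1. rewrite !nthv in *.
    destruct (Nat.ltb_spec 0 L); try lia. destruct (Nat.ltb_spec (2 * y 0 + 3) L); try lia.
    destruct (Nat.ltb_spec (2 * y 0 + 4) L); try lia.
    apply negb_true_iff, Nat.eqb_neq in h2. auto.
  - intros y H. exists (2 * y 0 + 5). unfold QC1. rewrite !nthv.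
    destruct (Nat.ltb_spec 0 (2 * y 0 + 5)); try lia. apply andb_true_iff. split. apply avail_prefix. lia.
    destruct (Nat.ltb_spec (2 * y 0 + 3) (2 * y 0 + 5)); try lia.
    destruct (Nat.ltb_spec (2 * y 0 + 4) (2 * y 0 + 5)); try lia.
    apply negb_true_iff, Nat.eqb_neq. auto.
Qed.
Lemma Sig0_nC1 : Sig 0 (fun v => ~ v (2 * v 0 + 3) <> v (2 * v 0 + 4)).
Proof.
  apply Sig0_local with (u := uC1 false) (Q := QC1 false). apply uC1_spec.
  - intros y L H. unfold QC1 in H. apply andb_true_iff in H as [h1 h2].
    apply avail_prefix in h1. rewrite !nthv in *.
    destruct (Nat.ltb_spec 0 L); try lia. destruct (Nat.ltb_spec (2 * y 0 + 3) L); try lia.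
    destruct (Nat.ltb_spec (2 * y 0 + 4) L); try lia.
    apply Nat.eqb_eq in h2. auto.
  - intros y H. exists (2 * y 0 + 5). unfold QC1. rewrite !nthv.
    destruct (Nat.ltb_spec 0 (2 * y 0 + 5)); try lia. apply andb_true_iff. split. apply avail_prefix. lia.
    destruct (Nat.ltb_spec (2 * y 0 + 3) (2 * y 0 + 5)); try lia.
    destruct (Nat.ltb_spec (2 * y 0 + 4) (2 * y 0 + 5)); try lia.
    apply Nat.eqb_eq. destruct (Nat.eq_dec (y (2 * y 0 + 3)) (y (2 * y 0 + 4))); tauto.
Qed.

Fixpoint U (k : nat) (a x : baire) : Prop :=
  match k with
  | 0 => exists M, a (code (prefix x M)) <> 0
  | S k' => exists m, ~ U k' a (ncons m x)
  end.

Definition ax (d : nat) (v : baire) : baire := fun i => v (d + 4 * i + 2).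
Definition xx (d : nat) (v : baire) : baire := fun t => v (iota d t).

Definition QY d c := existsb (fun M => negb (nthc c (d + 4 * keyc d c M + 2) =? 0)) (seq 0 (S c)).
Definition uY d := bex2 (nth2 (vr 1) (add2 (add2 (cst d) (mul2 (cst 4) (key3 (vr 1) (vr 0) (cst d)))) (cst 2))) (sc (vr 0)).
Lemma uY_spec d c : tf (uY d) [c] = b2n (QY d c).
Proof.
  unfold uY, QY. cbn [tf bex2 retf sc vr nth]. f_equal. apply existsb_ext. intro M.
  tfs2. cbn [key3 tf retf nth env map seq]. rewrite !cst_spec. reflexivity.
Qed.

Lemma iota_bound d t : iota d t <= d + 2 * t + 2 /\ (t < d -> iota d t = t).
Proof. unfold iota. destruct (Nat.ltb_spec t d); lia. Qed.

Lemma Sig0_Y d : Sig 0 (fun v => U 0 (ax d v) (xx d v)).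
Proof.
  apply Sig0_local with (u := uY d) (Q := QY d). apply uY_spec.
  - intros y L H. unfold QY in H. apply existsb_seq in H as [M [_ H]].
    apply negb_true_iff, Nat.eqb_neq in H. rewrite nthv in H.
    set (key := keyc d (code (prefix y L)) M) in *.
    destruct (Nat.ltb_spec (d + 4 * key + 2) L); try congruence.
    assert (Hk : key = code (prefix (xx d y) M)).
    { unfold key. apply keyc_prefix. intros t Ht.
      assert (M <= key).
      { unfold key, keyc. pose proof (code_ge_len (map (fun t => nthc (code (prefix y L)) (iota d t)) (seq 0 M))).
        rewrite length_map, length_seq in H1. auto. }
      pose proof (iota_bound d t). lia. }
    exists M. unfold ax. rewrite <- Hk. auto.
  - intros y [M HM]. unfold ax in HM. set (key := code (prefix (xx d y) M)) in *.
    exists (S (d + 4 * key + 2)). unfold QY. apply existsb_seq. exists M.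
    assert (M <= key). { unfold key. pose proof (code_ge_len (prefix (xx d y) M)). rewrite length_prefix in H. auto. }
    split.
    + pose proof (code_ge_len (prefix y (S (d + 4 * key + 2)))). rewrite length_prefix in H0. lia.
    + rewrite keyc_prefix; [change (prefix (fun t => y (iota d t)) M) with (prefix (xx d y) M); fold key; rewrite nthv|].
      * destruct (Nat.ltb_spec (d + 4 * key + 2) (S (d + 4 * key + 2))); [|lia].
        apply negb_true_iff, Nat.eqb_neq. auto.
      * intros t Ht. pose proof (iota_bound d t). lia.
Qed.

Definition Delta0 (G : baire -> Prop) := Sig 0 G /\ Sig 0 (fun y => ~ G y).

Lemma Delta0_tail G : Delta0 G -> Delta0 (fun y => G (btl y)).
Proof. intros [h1 h2]. split. apply Sig0_tail; auto. apply (Sig0_tail (fun y => ~ G y)); auto. Qed.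
Lemma Delta0_neg G : Delta0 G -> Delta0 (fun y => ~ G y).
Proof.
  intros [h1 h2]. split; auto. eapply Sig_ext; [|exact h1]. intro x. split; [tauto|]. apply NNPP.
Qed.
Lemma Delta0_and G1 G2 : Delta0 G1 -> Delta0 G2 -> Delta0 (fun y => G1 y /\ G2 y).
Proof.
  intros [h1 h2] [h3 h4]. split. apply Sig0_and; auto.
  eapply Sig_ext; [|apply Sig0_or; [exact h2 | exact h4]]. intro x. simpl.
  split. tauto. apply not_and_or.
Qed.

Lemma L2 k : forall G1 G2 W, Delta0 G1 -> Delta0 G2 -> Sig k W ->
  Sig k (fun y => G1 y \/ (G2 y /\ W y)).
Proof.
  induction k; intros G1 G2 W h1 h2 hW.
  - apply Sig0_or. apply h1. apply Sig0_and. apply h2. exact hW.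
  - destruct hW as [Bw [HB HW]].
    exists (fun v => G1 (btl v) \/ (G2 (btl v) /\ Bw v)). split.
    + eapply Sig_ext; [| apply (IHk (fun z => ~ G1 (btl z) /\ ~ G2 (btl z)) (fun z => ~ G1 (btl z)) (fun z => ~ Bw z))].
      * intro x. simpl. tauto.
      * apply Delta0_and; apply Delta0_neg, Delta0_tail; auto.
      * apply Delta0_neg, Delta0_tail; auto.
      * exact HB.
    + intro x. rewrite HW. split.
      * intros [H|[H [m Hm]]]. exists 0. left. exact H. exists m. right. split; auto.
      * intros [m [H|[H1 H2]]]. left. exact H. right. split. exact H1. exists m. exact H2.
Qed.

Lemma iota_S d t : iota (S d) (S t) = S (iota d t).
Proof. unfold iota. destruct (Nat.ltb_spec t d), (Nat.ltb_spec (S t) (S d)); lia. Qed.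
Lemma ax_ncons d m v : ax (S d) (ncons m v) = ax d v.
Proof. reflexivity. Qed.
Lemma xx_ncons d m v : xx (S d) (ncons m v) = ncons m (xx d v).
Proof.
  apply functional_extensionality. intros [|t]. reflexivity.
  unfold xx. rewrite iota_S. reflexivity.
Qed.

Definition Y k d v := U k (ax d v) (xx d v).
Lemma Sig_Y k : forall d, Sig k (Y k d).
Proof.
  induction k; intro d. apply Sig0_Y.
  exists (fun z => ~ Y k (S d) z). split.
  - eapply Sig_ext; [|apply (IHk (S d))]. intro x. split. tauto. apply NNPP.
  - intro x. unfold Y. simpl. split; intros [m Hm]; exists m;
    rewrite ?ax_ncons, ?xx_ncons in *; exact Hm.
Qed.

Lemma btl_ncons m x : btl (ncons m x) = x.
Proof. reflexivity. Qed.
Lemma ncons_btl y : ncons (y 0) (btl y) = y.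
Proof. apply functional_extensionality. intros [|i]; reflexivity. Qed.

Definition C1 (v : baire) := v (2 * v 0 + 3) <> v (2 * v 0 + 4).
Definition Par (q : baire) := Nat.even (q 0) <> Nat.even (q 1).
Lemma C1_ncons i q : C1 (ncons i q) <-> q (2 * i + 2) <> q (2 * i + 3).
Proof.
  unfold C1. change (ncons i q 0) with i.
  assert (e1 : ncons i q (2*i+3) = q (2*i+2)) by (replace (2*i+3) with (S (2*i+2)) by lia; reflexivity).
  assert (e2 : ncons i q (2*i+4) = q (2*i+3)) by (replace (2*i+4) with (S (2*i+3)) by lia; reflexivity).
  rewrite e1, e2. reflexivity.
Qed.
Lemma Delta0_C1 : Delta0 C1.
Proof. split. exact Sig0_C1. exact Sig0_nC1. Qed.
Lemma Delta0_C2 : Delta0 (fun v => Par (btl v)).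
Proof. apply Delta0_tail. split. exact Sig0_par. exact Sig0_npar. Qed.

Definition Nset K (q : baire) := (exists i, q (2 * i + 2) <> q (2 * i + 3)) \/ (Par q /\ U K (ax 0 q) (xx 0 q)).

Lemma Sig_Nset K : Sig K (Nset K).
Proof.
  destruct K as [|k].
  - eapply Sig_ext; [| apply Sig0_ex with (A := fun v => C1 v \/ (Par (btl v) /\ Y 0 0 (btl v)))].
    + intro q. unfold Nset. split.
      * intros [i [Hi|[h1 h2]]]. left. exists i. apply C1_ncons. auto. right. split; auto.
      * intros [[i Hi]|[h1 h2]]. exists i. left. apply C1_ncons. auto. exists 0. right. split; auto.
    + apply Sig0_or. exact Sig0_C1. apply Sig0_and. apply Delta0_C2. apply Sig0_tail, Sig0_Y.
  - exists (fun v => C1 v \/ (Par (btl v) /\ ~ Y k 1 v)). split.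
    + eapply Sig_ext; [| apply (L2 k (fun v => ~ C1 v /\ ~ Par (btl v)) (fun v => ~ C1 v) (Y k 1))].
      * intro x. simpl. destruct (classic (Y k 1 x)); tauto.
      * apply Delta0_and; apply Delta0_neg. apply Delta0_C1. apply Delta0_C2.
      * apply Delta0_neg, Delta0_C1.
      * apply Sig_Y.
    + intro q. unfold Nset, Y. rewrite ?ax_ncons, ?xx_ncons. simpl U. split.
      * intros [[i Hi]|[h1 [m h2]]]. exists i. left. apply C1_ncons. auto.
        exists m. right. split. exact h1. rewrite xx_ncons. exact h2.
      * intros [m [Hm|[h1 h2]]]. left. exists m. apply C1_ncons. auto.
        right. split. exact h1. exists m. rewrite xx_ncons in h2. exact h2.
Qed.

Fixpoint BSig (k : nat) (A : baire -> Prop) : Prop :=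
  match k with
  | 0 => exists P : nat -> bool, forall x, A x <-> exists m, P (code (prefix x m)) = true
  | S k' => exists B : baire -> Prop, BSig k' (fun z => ~ B z) /\ forall x, A x <-> exists m, B (ncons m x)
  end.

Lemma Sig_BSig k : forall A, Sig k A -> BSig k A.
Proof.
  induction k; intros A H; simpl in *.
  - destruct H as [P [_ H]]. eauto.
  - destruct H as [B [h1 h2]]. exists B. split; auto.
Qed.

Lemma BSig_ext k (A A' : baire -> Prop) : (forall x, A x <-> A' x) -> BSig k A -> BSig k A'.
Proof.
  destruct k; simpl; intros H [P h]; exists P; [|destruct h as [h1 h2]; split; auto]; intro x; rewrite <- H; auto.
Qed.

Lemma BSig_univ k : forall A, BSig k A -> exists a, forall x, A x <-> U k a x.
Proof.
  induction k; intros A H; simpl in *.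
  - destruct H as [P H]. exists (fun c => if P c then 1 else 0). intro x. rewrite H.
    split; intros [m hm]; exists m; destruct (P (code (prefix x m))); congruence.
  - destruct H as [B [h1 h2]]. destruct (IHk _ h1) as [a Ha]. exists a. intro x. rewrite h2.
    split; intros [m hm]; exists m. rewrite <- Ha. tauto. rewrite <- Ha in hm. apply NNPP. exact hm.
Qed.

Definition dec (P : Prop) : bool := if excluded_middle_informative P then true else false.
Lemma dec_true P : dec P = true <-> P.
Proof. unfold dec. destruct (excluded_middle_informative P); split; intro; congruence || tauto. Qed.

Definition cont (f : baire -> baire) := forall x M, exists L, forall y, agree x y L -> agree (f x) (f y) M.

Lemma BSig_pre k : forall A f, BSig k A -> cont f -> BSig k (fun x => A (f x)).
Proof.
  induction k; intros A f HA Hf.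
  - destruct HA as [P HP].
    exists (fun c => dec (exists s M, code s = c /\ forall y, prefix y (length s) = s -> P (code (prefix (f y) M)) = true)).
    intro x. rewrite HP. split.
    + intros [M HM]. destruct (Hf x M) as [L HL]. exists L. apply dec_true.
      exists (prefix x L), M. split; auto. intros y Hy. rewrite length_prefix in Hy.
      symmetry in Hy. apply agree_prefix in Hy. apply HL in Hy. apply prefix_agree in Hy.
      rewrite <- Hy. auto.
    + intros [L HL]. apply dec_true in HL as [s [M [h1 h2]]]. apply code_inj in h1. subst s.
      exists M. apply h2. rewrite length_prefix. auto.
  - destruct HA as [B [h1 h2]].
    exists (fun y => B (ncons (y 0) (f (btl y)))). split.
    + apply (IHk (fun z => ~ B z) (fun y => ncons (y 0) (f (btl y))) h1).
      intros y M. destruct M as [|M]. exists 0. intros y' _ i Hi. lia.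
      destruct (Hf (btl y) M) as [L HL]. exists (S L). intros y' Hy i Hi.
      destruct i as [|i]. simpl. apply Hy. lia.
      simpl. apply HL. intros j Hj. apply Hy. lia. lia.
    + intro x. rewrite h2. reflexivity.
Qed.

Lemma BSig0_union (A : nat -> baire -> Prop) : (forall p, BSig 0 (A p)) -> BSig 0 (fun x => exists p, A p x).
Proof.
  intro H. exists (fun c => dec (exists p (Q : nat -> bool), (forall x, A p x <-> exists m, Q (code (prefix x m)) = true) /\ Q c = true)).
  intro x. split.
  - intros [p Hp]. destruct (H p) as [Q HQ]. destruct (proj1 (HQ x) Hp) as [m Hm]. exists m. apply dec_true. eauto.
  - intros [m Hm]. destruct (proj1 (dec_true _) Hm) as [p [Q [h1 h2]]]. exists p. apply h1. eauto.
Qed.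

Definition Dset K (x : baire) := ~ U K (evens x) x.

Lemma Dset_not_BSig K : ~ BSig K (Dset K).
Proof.
  intro H. apply BSig_univ in H as [a Ha].
  set (x0 := fun p => a (Nat.div2 p)).
  assert (evens x0 = a). { apply functional_extensionality. intro i. unfold evens, x0. f_equal. apply Nat.div2_double. }
  specialize (Ha x0). unfold Dset in Ha. rewrite H in Ha. tauto.
Qed.

Definition Erel K (z w : baire) :=
  (forall i, z (S i) = w (S i)) /\ (Dset K (btl z) \/ Nat.even (z 0) = Nat.even (w 0)).

Lemma btl_eq z w : (forall i, z (S i) = w (S i)) -> btl z = btl w.
Proof. intro H. apply functional_extensionality. intro i. apply H. Qed.

Lemma Erel_equiv K : equivalence baire (Erel K).
Proof.
  constructor.
  - intro x. split. auto. right. reflexivity.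
  - intros x y z [h1 h2] [h3 h4]. split. intro i. rewrite h1. auto.
    rewrite (btl_eq _ _ h1) in *. destruct h2 as [h2|h2]. left. auto.
    destruct h4 as [h4|h4]. left. auto. right. congruence.
  - intros x y [h1 h2]. split. intro i. auto.
    rewrite (btl_eq _ _ h1) in h2. destruct h2 as [h2|h2]. left; auto. right; auto.
Qed.

Lemma ev_btl q : btl (evens q) = xx 0 q.
Proof. apply functional_extensionality. intro t. unfold btl, evens, xx, iota. simpl. f_equal. lia. Qed.
Lemma ev_ax q : evens (btl (evens q)) = ax 0 q.
Proof. apply functional_extensionality. intro t. unfold btl, evens, ax. f_equal. lia. Qed.

Lemma Erel_Pi0 K : Pi0_rel (S K) (Erel K).
Proof.
  unfold Pi0_rel, Pi0, Sigma0. eapply Sig_ext; [|apply (Sig_Nset K)].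
  intro q. unfold Nset, Erel, Dset, Par. rewrite ev_ax, ev_btl.
  assert (E1 : forall i, evens q (S i) = q (2 * i + 2)) by (intro i; unfold evens; f_equal; lia).
  assert (E2 : forall i, odds q (S i) = q (2 * i + 3)) by (intro i; unfold odds; f_equal; lia).
  change (evens q 0) with (q 0). change (odds q 0) with (q 1).
  split.
  - intros [[i Hi]|[h1 h2]] [h3 h4].
    + apply Hi. rewrite <- E1, <- E2. auto.
    + destruct h4; auto.
  - intro H. destruct (classic (exists i, q (2 * i + 2) <> q (2 * i + 3))) as [h|h]. left; auto.
    right. assert (forall i, evens q (S i) = odds q (S i)).
    { intro i. rewrite E1, E2. apply NNPP. intro h'. apply h. eauto. }
    split.
    + intro h'. apply H. split; auto.
    + apply NNPP. intro h'. apply H. split; auto.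
Qed.

Lemma div2_spec n : n = 2 * Nat.div2 n + (if Nat.odd n then 1 else 0).
Proof. pose proof (Nat.div2_odd n). destruct (Nat.odd n); simpl in *; lia. Qed.

Lemma Erel_count K x : countably_infinite (fun y => Erel K x y).
Proof.
  destruct (classic (Dset K (btl x))) as [HD|HD].
  - exists (fun k => ncons k (btl x)). split.
    + intros i j H. apply (f_equal (fun f => f 0)) in H. exact H.
    + intro y. split.
      * intros [h1 _]. exists (y 0). rewrite (btl_eq _ _ h1). apply ncons_btl.
      * intros [k <-]. split. intro; reflexivity. left; auto.
  - set (b := if Nat.even (x 0) then 0 else 1).
    exists (fun k => ncons (2 * k + b) (btl x)). split.
    + intros i j H. apply (f_equal (fun f => f 0)) in H. simpl in H. lia.
    + intro y. split.
      * intros [h1 h2]. destruct h2 as [h2|h2]; [tauto|].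
        exists (Nat.div2 (y 0)). rewrite (btl_eq _ _ h1). rewrite <- (ncons_btl y) at 3. f_equal.
        pose proof (div2_spec (y 0)). unfold b. rewrite h2. unfold Nat.odd in H.
        destruct (Nat.even (y 0)); simpl in *; lia.
      * intros [k <-]. split. intro; reflexivity. right.
        cbn [ncons]. rewrite Nat.even_add, Nat.even_mul. unfold b. destruct (Nat.even (x 0)); reflexivity.
Qed.

Definition interleave (z w : baire) : baire := fun n => if Nat.even n then z (Nat.div2 n) else w (Nat.div2 n).
Lemma evens_il z w : evens (interleave z w) = z.
Proof.
  apply functional_extensionality. intro i. unfold evens, interleave.
  rewrite Nat.even_mul. cbn [Nat.even orb]. f_equal. apply Nat.div2_double.
Qed.
Lemma odds_il z w : odds (interleave z w) = w.
Proof.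
  apply functional_extensionality. intro i. unfold odds, interleave.
  rewrite Nat.add_1_r, Nat.even_succ, Nat.odd_mul. cbn [Nat.odd Nat.even negb andb]. f_equal. apply Nat.div2_succ_double.
Qed.

Definition hh r x := interleave (ncons (2 * ufst r) x) (ncons (S (2 * usnd r)) x).

Lemma div2_le n : Nat.div2 n <= n.
Proof. pose proof (div2_spec n). destruct (Nat.odd n); lia. Qed.

Lemma ncons_agree c x y M n : agree x y M -> n < S M -> ncons c x n = ncons c y n.
Proof. intros H Hn. destruct n. reflexivity. simpl. apply H. lia. Qed.

Lemma cont_hh r : cont (hh r).
Proof.
  intros x M. exists M. intros y Hy i Hi. unfold hh, interleave.
  pose proof (div2_le i).
  destruct (Nat.even i); apply ncons_agree with (M := M); auto; lia.
Qed.

Definition gg (y : baire) := ncons (usnd (y 0)) (hh (ufst (y 0)) (btl y)).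
Lemma cont_gg : cont gg.
Proof.
  intros y M. exists (S M). intros y' Hy i Hi. unfold gg.
  assert (y 0 = y' 0) by (apply Hy; lia). rewrite H.
  destruct i. reflexivity. simpl. unfold hh, interleave. pose proof (div2_le i).
  destruct (Nat.even i); apply ncons_agree with (M := M); auto; try lia;
  intros j Hj; apply Hy; lia.
Qed.

Lemma cross (G : baire -> baire -> Prop) x :
  (forall u w, G u w -> btl u = btl w) ->
  forall a b, clos_refl_trans_1n baire G a b -> btl a = x -> Nat.even (a 0) = true -> Nat.even (b 0) = false ->
  exists u w, G u w /\ btl u = x /\ btl w = x /\ Nat.even (u 0) = true /\ Nat.even (w 0) = false.
Proof.
  intros HG a b H. induction H; intros h1 h2 h3.
  - congruence.
  - pose proof (HG _ _ H) as e. destruct (Nat.even (y 0)) eqn:E.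
    + apply IHclos_refl_trans_1n; auto. congruence.
    + exists x0, y. repeat split; auto. congruence.
Qed.

Lemma even_double n : Nat.even n = true -> n = 2 * Nat.div2 n.
Proof. intro h. pose proof (div2_spec n). unfold Nat.odd in H. rewrite h in H. simpl in H. lia. Qed.
Lemma odd_double n : Nat.even n = false -> n = S (2 * Nat.div2 n).
Proof. intro h. pose proof (div2_spec n). unfold Nat.odd in H. rewrite h in H. simpl in H. lia. Qed.

Lemma not_graphable K : ~ Sigma0_graphable (S K) (Erel K).
Proof.
  intros [G [HG [_ Hiff]]]. apply (Dset_not_BSig K).
  unfold Sigma0_rel, Sigma0 in HG. apply Sig_BSig in HG.
  set (G' := fun q => G (evens q) (odds q)) in *.
  assert (HGE : forall u w, G u w -> Erel K u w). { intros u w h. apply Hiff. apply rt_step. auto. }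
  assert (HD : forall x, Dset K x <-> exists r, G' (hh r x)).
  { intro x. unfold G', hh. split.
    - intro D. assert (Erel K (ncons 0 x) (ncons 1 x)). { split. intro; reflexivity. left. exact D. }
      apply Hiff in H. apply clos_rt_rt1n in H.
      destruct (cross G x (fun u w h => btl_eq _ _ (proj1 (HGE u w h))) _ _ H eq_refl eq_refl eq_refl)
        as [u [w [h1 [h2 [h3 [h4 h5]]]]]].
      exists (cpair (Nat.div2 (u 0)) (Nat.div2 (w 0))).
      destruct (unpair_cpair (Nat.div2 (u 0)) (Nat.div2 (w 0))) as [e1 e2]. rewrite e1, e2.
      rewrite evens_il, odds_il. rewrite <- (even_double (u 0)) by auto. rewrite <- (odd_double (w 0)) by auto. rewrite <- h2 at 1. rewrite <- h3.
      rewrite !ncons_btl. auto.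
    - intros [r Hr]. rewrite evens_il, odds_il in Hr. apply HGE in Hr as [_ [Hr|Hr]]. exact Hr.
      cbn [ncons] in Hr. rewrite Nat.even_succ, Nat.odd_mul, Nat.even_mul in Hr. discriminate. }
  destruct K as [|k].
  - eapply BSig_ext. intro x. symmetry. apply HD.
    apply BSig0_union. intro r. apply (BSig_pre 0 G' (hh r) HG (cont_hh r)).
  - destruct HG as [B [hB hG']].
    exists (fun y => B (gg y)). split.
    + apply (BSig_pre k (fun z => ~ B z) gg hB cont_gg).
    + intro x. rewrite HD. split.
      * intros [r Hr]. apply hG' in Hr as [m Hm]. exists (cpair r m). unfold gg.
        destruct (unpair_cpair r m) as [e1 e2]. change (ncons (cpair r m) x 0) with (cpair r m). rewrite e1, e2. exact Hm.
      * intros [s Hs]. exists (ufst s). apply hG'. exists (usnd s). exact Hs.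
Qed.

Theorem proposition3p2 (n : nat) (hn : 1 <= n) :
  exists E : baire -> baire -> Prop,
    equivalence baire E /\
    Pi0_rel n E /\
    (forall x, countably_infinite (fun y => E x y)) /\
    ~ Sigma0_graphable n E.
Proof.
  destruct n as [|K]. lia.
  exists (Erel K). split. apply Erel_equiv. split. apply Erel_Pi0. split. apply Erel_count.
  apply not_graphable.
Qed.
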